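(* For all $\delta,B>0$ there are $C,d_0\ge 1$ such that the following holds. Let $M$ be a positive integer and let $A_1,\ldots,A_K\subset[-M,M]\cap\mathbb Z$ with $K\ge CM$ and $|A_i|\ge\delta M\ge 2$ for all $i\in[K]$. Then there are $a\in\mathbb Z$ and $d\in\mathbb N$ with $1\le d\le d_0$ such that $$\{a+id:\ 0\le i\le BM^2\}\subset A_1+A_2+\cdots+A_K,$$ where $A_1+\cdots+A_K=\{a_1+\cdots+a_K: a_i\in A_i\ \forall i\}$. *)

(* Defs.v *)
From Stdlib Require Import Reals ZArith List.
Open Scope R_scope.

Definition in_sumset (A : nat -> list Z) (K : nat) (x : Z) : Prop :=
  exists a : nat -> Z,
    (forall j : nat, (1 <= j <= K)%nat -> In (a j) (A j)) /\
    x = fold_right Z.add 0%Z (map a (seq 1 K)).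

(* Main.v *)
Require Import Defs.
From Stdlib Require Import Reals ZArith List.
From Stdlib Require Import Bool Lia Lra Psatz Classical ClassicalEpsilon.
Open Scope R_scope.

Module Helpers.
Local Open Scope Z_scope.

Fixpoint sumZ (f : nat -> Z) (s n : nat) : Z :=
  match n with O => 0 | S n' => f s + sumZ f (S s) n' end.

Lemma fold_sumZ f n s : fold_right Z.add 0 (map f (seq s n)) = sumZ f s n.
Proof. revert s; induction n; intros s; simpl; [reflexivity| rewrite IHn; reflexivity]. Qed.

Lemma sumZ_ext f g n s : (forall i, (s <= i < s + n)%nat -> f i = g i) -> sumZ f s n = sumZ g s n.
Proof. revert s; induction n; intros s H; simpl; [reflexivity|].
  rewrite (H s) by lia. rewrite (IHn (S s)); [reflexivity|]. intros; apply H; lia. Qed.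

Lemma sumZ_add f g n s : sumZ (fun i => f i + g i) s n = sumZ f s n + sumZ g s n.
Proof. revert s; induction n; intros s; simpl; [reflexivity| rewrite IHn; ring]. Qed.

Lemma sumZ_mul c f n s : sumZ (fun i => c * f i) s n = c * sumZ f s n.
Proof. revert s; induction n; intros s; simpl; [ring| rewrite IHn; ring]. Qed.

Lemma sumZ_le f g n s : (forall i, (s <= i < s + n)%nat -> f i <= g i) -> sumZ f s n <= sumZ g s n.
Proof. revert s; induction n; intros s H; simpl; [lia|].
  assert (sumZ f (S s) n <= sumZ g (S s) n) by (apply IHn; intros; apply H; lia).
  specialize (H s ltac:(lia)). lia. Qed.

Lemma sumZ_last f n s : sumZ f s (S n) = sumZ f s n + f (s + n)%nat.
Proof. revert s; induction n; intros s; simpl.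
  - rewrite Nat.add_0_r; ring.
  - simpl in IHn. rewrite IHn. replace (S s + n)%nat with (s + S n)%nat by lia. ring. Qed.

Lemma sumZ_ind (p : nat -> bool) n s :
  sumZ (fun i => if p i then 1 else 0) s n = Z.of_nat (length (filter p (seq s n))).
Proof. revert s; induction n; intros s; simpl; [reflexivity|].
  rewrite IHn. destruct (p s); simpl length; lia. Qed.

Lemma sumZ_Rle (f w : nat -> Z) (c : R) n s :
  (forall i, (s <= i < s + n)%nat -> (IZR (f i) >= c * IZR (w i))%R) ->
  (IZR (sumZ f s n) >= c * IZR (sumZ w s n))%R.
Proof. revert s; induction n; intros s H; simpl; [lra|].
  rewrite !plus_IZR. specialize (IHn (S s) ltac:(intros; apply H; lia)).
  specialize (H s ltac:(lia)). lra. Qed.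

Lemma filter_split {T} (p : T -> bool) l :
  length l = (length (filter p l) + length (filter (fun x => negb (p x)) l))%nat.
Proof. induction l; simpl; [reflexivity|]. destruct (p a); simpl; lia. Qed.

Lemma filter_filter_sub {T} (p q : T -> bool) l :
  (forall x, p x = true -> q x = true) -> filter p (filter q l) = filter p l.
Proof. intros H; induction l; simpl; [reflexivity|].
  destruct (q a) eqn:Eq; simpl.
  - destruct (p a); rewrite IHl; reflexivity.
  - destruct (p a) eqn:Ep; [rewrite (H _ Ep) in Eq; discriminate| exact IHl]. Qed.

Lemma filter_all {T} (p : T -> bool) l : (forall x, In x l -> p x = true) -> filter p l = l.
Proof. induction l; intros H; simpl; [reflexivity|]. rewrite H by (left; auto).
  rewrite IHl; [reflexivity| intros; apply H; right; auto]. Qed.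

Lemma PH {T} (f : T -> Z) (n : nat) : forall l : list T,
  (forall x, In x l -> 1 <= f x <= Z.of_nat (S n)) ->
  exists v, 1 <= v <= Z.of_nat (S n) /\
    Z.of_nat (S n) * Z.of_nat (length (filter (fun x => f x =? v) l)) >= Z.of_nat (length l).
Proof.
  induction n; intros l H.
  - exists 1. split; [lia|]. rewrite filter_all; [lia|]. intros x Hx.
    apply Z.eqb_eq. specialize (H x Hx). lia.
  - set (hz := Z.of_nat (S (S n))).
    pose proof (filter_split (fun x => f x =? hz) l) as Hs.
    set (a := length (filter (fun x => f x =? hz) l)) in *.
    set (l' := filter (fun x => negb (f x =? hz)) l) in *.
    destruct (Z_ge_lt_dec (hz * Z.of_nat a) (Z.of_nat (length l))) as [Hge|Hlt].
    + exists hz. split; [unfold hz; lia| exact Hge].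
    + destruct (IHn l') as [v [Hv Hc]].
      { intros x Hx. unfold l' in Hx. apply filter_In in Hx as [Hx Hn].
        specialize (H x Hx). apply Bool.negb_true_iff, Z.eqb_neq in Hn. unfold hz in *; lia. }
      exists v. split; [lia|].
      unfold l' in Hc. rewrite filter_filter_sub in Hc.
      2:{ intros x Hx. apply Z.eqb_eq in Hx. apply Bool.negb_true_iff, Z.eqb_neq. lia. }
      set (e := length (filter (fun x => f x =? v) l)) in *.
      rewrite Hs in Hlt |- *. unfold hz in *. rewrite Nat2Z.inj_add in *.
      fold l' in Hc. rewrite !Nat2Z.inj_succ in *.
      assert (Z.of_nat a <= Z.of_nat e) by nia. nia.
Qed.


Definition sel (e : nat -> bool) (k : nat -> Z) := fun i => if e i then k i else 0.
Definition ones (k : nat -> Z) := fun i => if k i =? 1 then 1 else 0.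

Lemma ones_le k n s : (forall i, (s <= i < s + n)%nat -> 0 <= k i) -> sumZ (ones k) s n <= sumZ k s n.
Proof. intros H; apply sumZ_le; intros i Hi; specialize (H i Hi); unfold ones.
  destruct (k i =? 1) eqn:E; [apply Z.eqb_eq in E|]; lia. Qed.



Lemma sumZ_nonneg k n s : (forall i, (s <= i < s + n)%nat -> 0 <= k i) -> 0 <= sumZ k s n.
Proof. revert s; induction n; intros s H; simpl; [lia|].
  assert (0 <= sumZ k (S s) n) by (apply IHn; intros; apply H; lia).
  specialize (H s ltac:(lia)). lia. Qed.

Lemma sumZ_S f s n : sumZ f s (S n) = f s + sumZ f (S s) n.
Proof. reflexivity. Qed.

Lemma subsum (k : nat -> Z) (W : Z) : forall n s,
  (forall i, (s <= i < s + n)%nat -> 0 <= k i <= W) ->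
  forall t, 0 <= t <= sumZ k s n ->
  exists e : nat -> bool, sumZ (sel e k) s n <= t /\
     t - sumZ (sel e k) s n <= Z.max 0 (W - 1 - sumZ (ones k) s n).
Proof.
  induction n; intros s Hk t Ht.
  - exists (fun _ => false). simpl in *. lia.
  - simpl in Ht. rewrite (sumZ_S (ones k)).
    assert (Hr : forall i, (S s <= i < S s + n)%nat -> 0 <= k i <= W) by (intros; apply Hk; lia).
    assert (HU : sumZ (ones k) (S s) n <= sumZ k (S s) n) by (apply ones_le; intros; apply Hr; auto).
    assert (HS0 : 0 <= sumZ (ones k) (S s) n) by (apply sumZ_nonneg; intros; unfold ones; destruct (k i =? 1); lia).
    pose proof (Hk s ltac:(lia)) as Hks.
    set (S' := sumZ k (S s) n) in *.
    set (U' := sumZ (ones k) (S s) n) in *.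
    assert (Hext : forall (b : bool) (e' : nat -> bool),
      sumZ (sel (fun i => if Nat.eqb i s then b else e' i) k) (S s) n = sumZ (sel e' k) (S s) n).
    { intros b e'. apply sumZ_ext. intros i Hi. unfold sel.
      destruct (Nat.eqb i s) eqn:E; [apply Nat.eqb_eq in E; lia| reflexivity]. }
    assert (Hall : sumZ (sel (fun _ => true) k) (S s) n = S').
    { apply sumZ_ext. intros; reflexivity. }
    assert (Hall' : sumZ (sel (fun i => if Nat.eqb i s then false else true) k) (S s) n = S').
    { rewrite Hext. exact Hall. }
    assert (Hc : forall (b : bool) (e' : nat -> bool),
      sumZ (sel (fun i => if Nat.eqb i s then b else e' i) k) s (S n) = (if b then k s else 0) + sumZ (sel e' k) (S s) n).
    { intros b e'. rewrite sumZ_S, Hext. unfold sel at 1. rewrite Nat.eqb_refl. reflexivity. }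
    assert (Hc' : sumZ (sel (fun _ => true) k) s (S n) = k s + S').
    { rewrite sumZ_S, Hall. reflexivity. }
    unfold ones at 1.
    destruct (k s =? 1) eqn:E1.
    + apply Z.eqb_eq in E1.
      destruct (Z_le_gt_dec t S') as [Hle|Hgt].
      * destruct (IHn (S s) Hr t ltac:(lia)) as [e' [H1 H2]].
        destruct (Z.eq_dec t (sumZ (sel e' k) (S s) n)) as [Heq|Hne].
        -- exists (fun i => if Nat.eqb i s then false else e' i).
           rewrite Hc. lia.
        -- exists (fun i => if Nat.eqb i s then true else e' i).
           rewrite Hc. lia.
      * exists (fun _ => true). rewrite Hc'. lia.
    + apply Z.eqb_neq in E1.
      destruct (Z_le_gt_dec (k s) t) as [Hle|Hgt].
      * destruct (IHn (S s) Hr (t - k s) ltac:(lia)) as [e' [H1 H2]].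
        exists (fun i => if Nat.eqb i s then true else e' i).
        rewrite Hc. lia.
      * destruct (Z_le_gt_dec t S') as [Hle'|Hgt'].
        -- destruct (IHn (S s) Hr t ltac:(lia)) as [e' [H1 H2]].
           exists (fun i => if Nat.eqb i s then false else e' i).
           rewrite Hc. lia.
        -- exists (fun i => if Nat.eqb i s then false else true).
           rewrite Hc, Hall. lia.
Qed.


Lemma list_min (l : list Z) : l <> nil -> exists m, In m l /\ forall x, In x l -> m <= x.
Proof. induction l as [|a l IH]; intros H; [congruence|].
  destruct l as [|b l'].
  - exists a. split; [left; auto|]. intros x [->|[]]; lia.
  - destruct IH as [m [Hm Hm']]; [discriminate|].
    exists (Z.min a m). split.
    + destruct (Z.min_spec a m) as [[_ ->]|[_ ->]]; [left; auto| right; auto].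
    + intros x [->|Hx]; [lia| specialize (Hm' x Hx); lia]. Qed.

Lemma list_max (l : list Z) : l <> nil -> exists m, In m l /\ forall x, In x l -> x <= m.
Proof. induction l as [|a l IH]; intros H; [congruence|].
  destruct l as [|b l'].
  - exists a. split; [left; auto|]. intros x [->|[]]; lia.
  - destruct IH as [m [Hm Hm']]; [discriminate|].
    exists (Z.max a m). split.
    + destruct (Z.max_spec a m) as [[_ ->]|[_ ->]]; [right; auto| left; auto].
    + intros x [->|Hx]; [lia| specialize (Hm' x Hx); lia]. Qed.

Lemma gap_pair (l : list Z) (M g : Z) : NoDup l -> (forall x, In x l -> -M <= x <= M) ->
  1 <= g -> 0 <= M -> g * (Z.of_nat (length l) - 1) > 2 * M ->
  exists x y, In x l /\ In y l /\ 0 < y - x < g.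
Proof.
  intros Hnd Hb Hg HM Hlen. apply NNPP; intros Hno.
  set (h := fun x => Z.to_nat ((x + M) / g)).
  assert (Hmap : NoDup (map h l)).
  { apply NoDup_map_NoDup_ForallPairs; [|exact Hnd].
    intros a b Ha Hb' Hab. unfold h in Hab.
    pose proof (Hb a Ha). pose proof (Hb b Hb').
    apply Z2Nat.inj in Hab; try (apply Z.div_pos; lia).
    pose proof (Z.div_mod (a + M) g ltac:(lia)).
    pose proof (Z.div_mod (b + M) g ltac:(lia)).
    pose proof (Z.mod_pos_bound (a + M) g ltac:(lia)).
    pose proof (Z.mod_pos_bound (b + M) g ltac:(lia)).
    destruct (Z.lt_trichotomy a b) as [Hlt|[Heq|Hgt]]; [|exact Heq|].
    - exfalso; apply Hno. exists a, b. split; [auto|split; [auto|]]. nia.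
    - exfalso; apply Hno. exists b, a. split; [auto|split; [auto|]]. nia. }
  assert (Hinc : incl (map h l) (seq 0 (S (Z.to_nat ((2 * M) / g))))).
  { intros y Hy. apply in_map_iff in Hy as [x [<- Hx]]. apply in_seq.
    pose proof (Hb x Hx). unfold h.
    assert ((x + M) / g <= (2 * M) / g) by (apply Z.div_le_mono; lia).
    assert (0 <= (x + M) / g) by (apply Z.div_pos; lia). lia. }
  pose proof (NoDup_incl_length Hmap Hinc) as Hl.
  rewrite length_map, length_seq in Hl.
  pose proof (Z.mul_div_le (2 * M) g ltac:(lia)).
  assert (0 <= (2 * M) / g) by (apply Z.div_pos; lia).
  assert (Z.of_nat (length l) <= (2 * M) / g + 1) by lia.
  nia.
Qed.

Lemma res_pair (l : list Z) (d : Z) : NoDup l -> l <> nil -> 1 <= d ->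
  exists x k, In x l /\ In (x + k * d) l /\ 0 <= k /\ (k + 1) * d >= Z.of_nat (length l).
Proof.
  intros Hnd Hne Hd.
  destruct (PH (fun x => x mod d + 1) (Z.to_nat (d - 1)) l) as [v [Hv Hc]].
  { intros x _. pose proof (Z.mod_pos_bound x d ltac:(lia)). lia. }
  rewrite Nat2Z.inj_succ, Z2Nat.id in Hc by lia. replace (Z.succ (d - 1)) with d in Hc by lia.
  set (C := filter (fun x => x mod d + 1 =? v) l) in *.
  assert (HC : C <> nil).
  { intros E. rewrite E in Hc. simpl in Hc. destruct l; [congruence|]. simpl in Hc. lia. }
  destruct (list_min C HC) as [u [Hu Hu']].
  destruct (list_max C HC) as [w [Hw Hw']].
  assert (Hres : forall x, In x C -> x - u = d * ((x - u) / d)).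
  { intros x Hx. unfold C in Hx, Hu. apply filter_In in Hx as [_ Hx]. apply filter_In in Hu as [_ Hu2].
    apply Z.eqb_eq in Hx, Hu2.
    assert ((x - u) mod d = 0).
    { rewrite Zminus_mod. replace (x mod d) with (u mod d) by lia. rewrite Z.sub_diag. reflexivity. }
    pose proof (Z.div_mod (x - u) d ltac:(lia)). lia. }
  set (k := (w - u) / d).
  exists u, k.
  assert (Hwk : w = u + k * d) by (pose proof (Hres w Hw); unfold k; lia).
  split; [unfold C in Hu; apply filter_In in Hu; tauto|].
  split; [rewrite <- Hwk; unfold C in Hw; apply filter_In in Hw; tauto|].
  assert (Hk0 : 0 <= k) by (pose proof (Hw' u Hu); unfold k; apply Z.div_pos; lia).
  split; [exact Hk0|].
  set (h := fun x => Z.to_nat ((x - u) / d)).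
  assert (Hmap : NoDup (map h C)).
  { apply NoDup_map_NoDup_ForallPairs; [|apply NoDup_filter; exact Hnd].
    intros a b Ha Hb Hab. unfold h in Hab.
    pose proof (Hu' a Ha). pose proof (Hu' b Hb).
    apply Z2Nat.inj in Hab; try (apply Z.div_pos; lia).
    pose proof (Hres a Ha). pose proof (Hres b Hb). lia. }
  assert (Hinc : incl (map h C) (seq 0 (S (Z.to_nat k)))).
  { intros y Hy. apply in_map_iff in Hy as [x [<- Hx]]. apply in_seq.
    pose proof (Hu' x Hx). pose proof (Hw' x Hx). unfold h.
    assert ((x - u) / d <= k) by (unfold k; apply Z.div_le_mono; lia).
    assert (0 <= (x - u) / d) by (apply Z.div_pos; lia). lia. }
  pose proof (NoDup_incl_length Hmap Hinc) as Hl.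
  rewrite length_map, length_seq in Hl.
  assert (Z.of_nat (length C) <= k + 1) by lia.
  nia.
Qed.


Lemma thresh (p : nat -> bool) R : 0 <= R -> forall j,
  sumZ (fun i => if p i && (sumZ (fun m => if p m then 1 else 0) 1 (pred i) <? R) then 1 else 0) 1 j
  = Z.min (sumZ (fun m => if p m then 1 else 0) 1 j) R.
Proof.
  intros HR j. induction j.
  - simpl. lia.
  - rewrite !sumZ_last, IHj. simpl (1 + j)%nat. simpl pred.
    destruct (p (S j)); simpl;
    destruct (Z.ltb_spec (sumZ (fun m => if p m then 1 else 0) 1 j) R); lia.
Qed.

Lemma nat_above (x : R) : exists n : nat, (x <= INR n)%R.
Proof.
  destruct (archimed x) as [H1 _].
  destruct (Z_le_gt_dec (up x) 0) as [Hle|Hgt].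
  - exists 0%nat. apply IZR_le in Hle. simpl. lra.
  - exists (Z.to_nat (up x)). rewrite INR_IZR_INZ, Z2Nat.id by lia. lra.
Qed.

End Helpers.
Import Helpers.

Theorem lemma2p12 :
  forall delta B : R, 0 < delta -> 0 < B ->
  exists C d0 : R, 1 <= C /\ 1 <= d0 /\
    forall (M K : nat) (A : nat -> list Z),
      (1 <= M)%nat ->
      C * INR M <= INR K ->
      (forall i : nat, (1 <= i <= K)%nat ->
         NoDup (A i) /\
         (forall x : Z, In x (A i) -> (- Z.of_nat M <= x <= Z.of_nat M)%Z) /\
         delta * INR M <= INR (length (A i))) ->
      2 <= delta * INR M ->
      exists (a : Z) (d : nat),
        (1 <= d)%nat /\ INR d <= d0 /\
        forall i : Z, (0 <= i)%Z -> IZR i <= B * INR M ^ 2 ->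
          in_sumset A K (a + i * Z.of_nat d)%Z.
Proof.
  intros delta B Hdel HB.
  destruct (nat_above (8 / delta)) as [g0 Hg0].
  set (g := (g0 + 2)%nat).
  assert (Hg : 8 / delta <= INR g) by (unfold g; rewrite plus_INR; simpl; lra).
  assert (Hg8 : INR g * delta >= 8).
  { apply Rmult_le_compat_r with (r := delta) in Hg; [|lra].
    unfold Rdiv in Hg. rewrite Rmult_assoc, Rinv_l, Rmult_1_r in Hg by lra. lra. }
  assert (Hg2 : 2 <= INR g) by (unfold g; rewrite plus_INR; simpl; pose proof (pos_INR g0); lra).
  destruct (nat_above (2 * INR g * B / delta)) as [r0 Hr0].
  set (rho := (r0 + 2)%nat).
  assert (Hrho : 2 * INR g * B / delta <= INR rho) by (unfold rho; rewrite plus_INR; simpl; lra).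
  assert (Hrho2 : 2 <= INR rho) by (unfold rho; rewrite plus_INR; simpl; pose proof (pos_INR r0); lra).
  assert (HgBd : 0 <= 2 * INR g * B / delta).
  { unfold Rdiv. apply Rmult_le_pos; [nra| left; apply Rinv_0_lt_compat; lra]. }
  exists (INR rho * INR g + INR rho + 2 * INR g * B / delta), (INR g).
  split; [nra|]. split; [lra|].
  intros M K A HM HK HA HdM.
  set (Mz := Z.of_nat M).
  set (gz := Z.of_nat g).
  assert (HMr : 1 <= INR M) by (apply (le_INR 1); exact HM).
  assert (HMz : (1 <= Mz)%Z) by (unfold Mz; lia).
  assert (Hgz : (2 <= gz)%Z) by (unfold gz, g; lia).
  assert (Hlen2 : forall i, (1 <= i <= K)%nat -> (2 <= Z.of_nat (length (A i)))%Z).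
  { intros i Hi. destruct (HA i Hi) as [_ [_ H3]].
    assert (2 <= INR (length (A i))) by lra.
    rewrite INR_IZR_INZ in H. apply le_IZR in H. exact H. }
  assert (Hgap : forall i, exists p : Z * Z, (1 <= i <= K)%nat ->
     In (fst p) (A i) /\ In (snd p) (A i) /\ (0 < snd p - fst p < gz)%Z).
  { intros i. destruct (le_lt_dec 1 i) as [H1|H1]; [destruct (le_lt_dec i K) as [H2|H2]|].
    2,3: exists (0%Z, 0%Z); intros; lia.
    destruct (HA i (conj H1 H2)) as [Hnd [Hb Hl]].
    destruct (gap_pair (A i) Mz gz Hnd Hb ltac:(lia) ltac:(lia)) as [x [y [Hx [Hy Hxy]]]].
    - apply Z.lt_gt, lt_IZR. rewrite !mult_IZR, minus_IZR.
      unfold gz, Mz. rewrite <- !INR_IZR_INZ.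
      assert (INR (length (A i)) - 1 >= delta * INR M / 2) by lra.
      assert (INR g * (INR (length (A i)) - 1) >= INR g * (delta * INR M / 2)).
      { apply Rle_ge, Rmult_le_compat_l; [lra| lra]. }
      nra.
    - exists (x, y). intros _. simpl. auto. }
  destruct (ClassicalEpsilon.choice _ Hgap) as [gp Hgp].
  set (f := fun i => (snd (gp i) - fst (gp i))%Z).
  destruct (PH f g0 (seq 1 K)) as [dz [Hdz Hcnt]].
  { intros i Hi. apply in_seq in Hi. destruct (Hgp i ltac:(lia)) as [_ [_ H]].
    unfold f. unfold gz, g in H. lia. }
  rewrite length_seq in Hcnt.
  rewrite <- (sumZ_ind (fun i => (f i =? dz)%Z)) in Hcnt.
  set (e := fun m => if (f m =? dz)%Z then 1%Z else 0%Z) in *.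
  set (R0 := (Z.of_nat rho * Mz)%Z).
  assert (HKnat : (rho * g * M <= K)%nat).
  { apply INR_le. rewrite !mult_INR.
    assert (INR rho * INR g * INR M <= (INR rho * INR g + INR rho + 2 * INR g * B / delta) * INR M).
    { apply Rmult_le_compat_r; [lra|]. pose proof (pos_INR rho). lra. }
    lra. }
  assert (HcR : (R0 <= sumZ e 1 K)%Z).
  { unfold R0, Mz. assert (Z.of_nat (rho * g * M) <= Z.of_nat K)%Z by lia.
    rewrite !Nat2Z.inj_mul in H. unfold g in *. rewrite Nat2Z.inj_succ in Hcnt.
    rewrite Nat2Z.inj_add in H. nia. }
  assert (HR0 : (0 <= R0)%Z) by (unfold R0; lia).
  set (o := fun i => ((f i =? dz)%Z && (sumZ e 1 (pred i) <? R0)%Z)%bool).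
  assert (Hthr : sumZ (fun i => if o i then 1%Z else 0%Z) 1 K = Z.min (sumZ e 1 K) R0)
    by exact (thresh (fun i => (f i =? dz)%Z) R0 HR0 K).
  rewrite Z.min_r in Hthr by lia.
  assert (Hres : forall i, exists p : Z * Z, (1 <= i <= K)%nat ->
     In (fst p) (A i) /\ In (fst p + snd p * dz)%Z (A i) /\ (0 <= snd p)%Z /\
     ((snd p + 1) * dz >= Z.of_nat (length (A i)))%Z).
  { intros i. destruct (le_lt_dec 1 i) as [H1|H1]; [destruct (le_lt_dec i K) as [H2|H2]|].
    2,3: exists (0%Z, 0%Z); intros; lia.
    destruct (HA i (conj H1 H2)) as [Hnd _].
    pose proof (Hlen2 i (conj H1 H2)) as Hl2.
    destruct (res_pair (A i) dz Hnd) as [x [k [Hx [Hy [Hk Hkl]]]]].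
    - intros E. rewrite E in Hl2. simpl in Hl2. lia.
    - lia.
    - exists (x, k). intros _. simpl. auto. }
  destruct (ClassicalEpsilon.choice _ Hres) as [rp Hrp].
  assert (Hdz' : (Z.to_nat dz <= g)%nat) by (unfold g; lia).
  set (x := fun i => if o i then fst (gp i) else fst (rp i)).
  set (k := fun i => if o i then 1%Z else snd (rp i)).
  assert (Hxk : forall i, (1 <= i <= K)%nat ->
    In (x i) (A i) /\ In (x i + k i * dz)%Z (A i) /\ (0 <= k i <= 2 * Mz)%Z).
  { intros i Hi. destruct (Hgp i Hi) as [G1 [G2 G3]]. destruct (Hrp i Hi) as [R1 [R2 [R3 R4]]].
    destruct (HA i Hi) as [_ [Hb _]].
    unfold x, k. destruct (o i) eqn:Eo.
    - unfold o in Eo. apply andb_true_iff in Eo as [Eo _]. apply Z.eqb_eq in Eo. unfold f in Eo.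
      split; [auto|]. split; [replace (fst (gp i) + 1 * dz)%Z with (snd (gp i)) by lia; auto| lia].
    - split; [auto|]. split; [auto|]. split; [lia|].
      pose proof (Hb _ R1). pose proof (Hb _ R2). unfold Mz. nia. }
  assert (HU : (R0 <= sumZ (ones k) 1 K)%Z).
  { rewrite <- Hthr. apply sumZ_le. intros i Hi. unfold ones, k.
    destruct (o i); [reflexivity|]. destruct (snd (rp i) =? 1)%Z; lia. }
  set (rk := fun i => snd (rp i)).
  set (Snon := sumZ (fun i => if o i then 0%Z else rk i) 1 K).
  assert (Hsplit : sumZ k 1 K = (R0 + Snon)%Z).
  { rewrite <- Hthr. unfold Snon. rewrite <- sumZ_add. apply sumZ_ext. intros i _.
    unfold k, rk. destruct (o i); lia. }
  assert (HKcnt : (sumZ (fun i => if o i then 0%Z else 1%Z) 1 K = Z.of_nat K - R0)%Z).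
  { assert (sumZ (fun i => if o i then 1%Z else 0%Z) 1 K + sumZ (fun i => if o i then 0%Z else 1%Z) 1 K = Z.of_nat K)%Z.
    { assert (Hone : sumZ (fun _ => 1%Z) 1 K = Z.of_nat K).
      { pose proof (sumZ_ind (fun _ : nat => true) K 1) as H. cbv beta in H. rewrite H, filter_all, length_seq; auto. }
      rewrite <- sumZ_add, <- Hone. apply sumZ_ext.
      intros i _. destruct (o i); lia. }
    lia. }
  assert (HSnon0 : (0 <= Snon)%Z).
  { apply sumZ_nonneg. intros i Hi. destruct (Hrp i ltac:(lia)) as [_ [_ [H _]]].
    unfold rk. destruct (o i); lia. }
  assert (HSbig : B * INR M ^ 2 <= IZR (sumZ k 1 K)).
  { rewrite Hsplit, plus_IZR.
    assert (HR0r : IZR R0 = INR rho * INR M) by (unfold R0, Mz; rewrite mult_IZR, <- !INR_IZR_INZ; reflexivity).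
    destruct (Rle_lt_dec (delta * INR M) (2 * INR g)) as [Hsm|Hlg].
    - assert (B * INR M <= 2 * INR g * B / delta).
      { apply Rmult_le_reg_r with delta; [lra|].
        replace (2 * INR g * B / delta * delta) with (2 * INR g * B) by (field; lra). nra. }
      apply IZR_le in HSnon0. rewrite HR0r. simpl. nra.
    - set (c := delta * INR M / (2 * INR g)).
      assert (Hc2 : c * (2 * INR g) = delta * INR M) by (unfold c; field; lra).
      assert (Hc1 : 1 < c) by nra.
      assert (Hper : forall i, (1 <= i < 1 + K)%nat ->
        IZR (if o i then 0%Z else rk i) >= c * IZR (if o i then 0%Z else 1%Z)).
      { intros i Hi. destruct (o i); [lra|].
        destruct (Hrp i ltac:(lia)) as [_ [_ [H0 H1]]]. destruct (HA i ltac:(lia)) as [_ [_ Hl]].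
        fold (rk i) in H0, H1.
        apply Z.ge_le, IZR_le in H1. rewrite mult_IZR, plus_IZR, <- INR_IZR_INZ in H1.
        assert (Hdg : IZR dz <= INR g - 1).
        { unfold g. rewrite plus_INR. simpl (INR 2). destruct Hdz as [_ Hdz]. apply IZR_le in Hdz.
          rewrite <- INR_IZR_INZ, S_INR in Hdz. lra. }
        apply IZR_le in H0.
        assert ((IZR (rk i) + 1) * INR g >= delta * INR M).
        { assert ((IZR (rk i) + 1) * IZR dz <= (IZR (rk i) + 1) * INR g) by (apply Rmult_le_compat_l; lra). lra. }
        nra. }
      pose proof (sumZ_Rle _ _ c K 1 Hper) as Hs. rewrite HKcnt, minus_IZR, HR0r, <- INR_IZR_INZ in Hs.
      fold Snon in Hs.
      assert (HKR : INR K - INR rho * INR M >= 2 * INR g * B / delta * INR M).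
      { pose proof (pos_INR rho). pose proof (pos_INR g).
        assert (0 <= INR rho * INR g * INR M) by (repeat apply Rmult_le_pos; lra).
        lra. }
      assert (Hcb : c * (2 * INR g * B / delta * INR M) = B * INR M ^ 2) by (unfold c; field; lra).
      assert (0 < c) by lra.
      assert (c * (INR K - INR rho * INR M) >= c * (2 * INR g * B / delta * INR M)) by (apply Rmult_ge_compat_l; lra).
      pose proof (pos_INR rho). assert (0 <= INR rho * INR M) by nra. lra. }
  exists (sumZ x 1 K), (Z.to_nat dz).
  split; [lia|]. split.
  { apply le_INR in Hdz' . exact Hdz'. }
  intros t Ht0 Ht.
  assert (HtS : (t <= sumZ k 1 K)%Z) by (apply le_IZR; lra).
  destruct (subsum k (2 * Mz)%Z K 1 ltac:(intros i Hi; apply Hxk; lia) t ltac:(lia)) as [ev [He1 He2]].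
  rewrite Z.max_l in He2 by lia.
  exists (fun j => (x j + sel ev k j * dz)%Z). split.
  - intros j Hj. destruct (Hxk j Hj) as [H1 [H2 _]]. unfold sel. destruct (ev j).
    + exact H2.
    + rewrite Z.mul_0_l, Z.add_0_r. exact H1.
  - rewrite fold_sumZ, sumZ_add, Z2Nat.id by lia.
    rewrite (sumZ_ext (fun j => sel ev k j * dz)%Z (fun j => dz * sel ev k j)%Z) by (intros; ring).
    rewrite sumZ_mul. assert (sumZ (sel ev k) 1 K = t) by lia. rewrite H. ring.
Qed.
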